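(* Every CQAP $Q\in\mathrm{CQAP}_0$ with at least one variable has dynamic width $\delta(Q)=0$ and static width $\mathsf w(Q)=1$.
   Context: CQAP. A conjunctive query with free access patterns (CQAP) has the form $Q(\mathcal O\mid\mathcal I)=R_1(\mathcal X_1),\dots,R_n(\mathcal X_n)$, where $R_i(\mathcal X_i)$ are atoms, $\mathit{vars}(Q)=\bigcup_i\mathcal X_i$, and the free variables $\mathcal O\cup\mathcal I\subseteq\mathit{vars}(Q)$ are partitioned into input variables $\mathcal I$ and output variables $\mathcal O$ (either may be empty); the other variables are bound. $\mathit{atoms}(X)$ denotes the set of atoms whose schema contains $X$. Fracture. The fracture $Q_\dagger$ of $Q$ is obtained by: replacing every occurrence of an input variable in every atom by a distinct fresh variable; computing the connected components of the hypergraph of the resulting query (vertices = variables, hyperedges = atom schemas); within each connected component, replacing all fresh variables originating from the same input variable of $Q$ by one fresh input variable. Output and bound variables are unchanged. Structural classes. $B$ dominates $A$ if $\mathit{atoms}(A)\subsetneq\mathit{atoms}(B)$. A CQAP is free-dominant (input-dominant) if whenever $A$ is free (input) and $B$ dominates $A$, then $B$ is free (input). It is hierarchical if for all variables $A,B$: $\mathit{atoms}(A)\subseteq\mathit{atoms}(B)$, or $\mathit{atoms}(B)\subseteq\mathit{atoms}(A)$, or $\mathit{atoms}(A)\cap\mathit{atoms}(B)=\emptyset$. $\mathrm{CQAP}_0$ is the class of CQAPs whose fracture is hierarchical, free-dominant and input-dominant. Variable orders. A variable order (VO) $\omega$ for a CQAP is a rooted forest with exactly one node per variable such that the variables of each atom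 lie on a common root-to-leaf path; $\mathit{dep}_\omega(X)$ is the set of ancestors $Y$ of $X$ that occur in a common atom with some variable of the subtree rooted at $X$. The extended VO adds leaves: each atom becomes a child of its lowest variable; then, processing variables bottom-up, at each variable $X$ with $\mathcal S=\{X\}\cup\mathit{dep}_\omega(X)$ and $\mathcal R$ the set of atoms below $X$, consider candidate indicator atoms $I_{\mathcal Z}R(\mathcal Z)$ for atoms $R(\mathcal Y)$ not in $\mathcal R$ with $\mathcal Z=\mathcal Y\cap\mathcal S\neq\emptyset$; run the GYO reduction (repeatedly delete a vertex occurring in only one hyperedge and a hyperedge contained in another) on the hypergraph whose hyperedges are the schemas of the candidates and of $\mathcal R$, and add as children of $X$ those candidates whose hyperedges survive in the fixpoint. All VOs are extended. A VO is access-top if no bound variable is an ancestor of a free variable and no output variable is an ancestor of an input variable. Widths. For a VO $\omega$ and variable $X$, $\omega_X$ is the subtree rooted at $X$ and $Q_X$ the join of all atoms and indicator atoms at the leaves of $\omega_X$. For a variable set $\mathcal F$, $\rho^*_{Q_X}(\mathcal F)$ is the minimum of $\sum_e\lambda_e$ over $\lambda_e\in[0,1]$ indexed by atoms $e$ of $Q_X$ subject to $\sum_{e\ni Y}\lambda_e\ge1$ for all $Y\in\mathcal F$ (so $\rho^*(\emptyset)=0$). $\mathsf w(\omega)=\max_X\rho^*_{Q_X}(\{X\}\cup\mathit{dep}_\omega(X))$ and $\delta(\omega)=\max_X\max_{R(\mathcal Y)}\rho^*_{Q_X}((\{X\}\cup\mathit{dep}_\omega(X))\setminus\mathcal Y)$,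 the inner maximum over atoms and indicator atoms $R(\mathcal Y)$ at leaves of $\omega_X$. For a CQAP $Q$, $(\delta(Q),\mathsf w(Q))$ is the lexicographically smallest pair $(\delta(\omega),\mathsf w(\omega))$ (first minimise $\delta$, then $\mathsf w$) over all access-top VOs $\omega$ of $Q_\dagger$. *)

(* Defs.v *)
From HB Require Import structures.
From mathcomp Require Import all_boot all_order all_algebra.
From mathcomp Require Import reals.

Set Implicit Arguments.
Unset Strict Implicit.
Unset Printing Implicit Defensive.

Import Order.TTheory GRing.Theory Num.Theory.

(* CQAPs.  Variables live in a finite type [qV]; only the variables that     *)
(* occur in some atom are variables of the query ([qvars]).  Atoms are       *)
(* no role in any of the notions involved, so they are not recorded.        *)
Record cqap := CQAP {
  qV : finType;
  qn : nat;
  qschema : 'I_qn -> {set qV};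
  qinp : {set qV};
  qout : {set qV}
}.

Definition qvars (Q : cqap) : {set qV Q} := \bigcup_(i < qn Q) qschema i.

Definition wf_cqap (Q : cqap) : Prop :=
  [/\ qinp Q \subset qvars Q, qout Q \subset qvars Q & [disjoint qinp Q & qout Q]].

Definition qfree (Q : cqap) (x : qV Q) : bool := (x \in qinp Q) || (x \in qout Q).

Definition qatoms (Q : cqap) (x : qV Q) : {set 'I_(qn Q)} :=
  [set i | x \in qschema i].

Definition dominates (Q : cqap) (B A : qV Q) : bool := qatoms A \proper qatoms B.

Definition free_dominant (Q : cqap) : Prop :=
  forall A B, A \in qvars Q -> B \in qvars Q -> qfree A -> dominates B A -> qfree B.

Definition input_dominant (Q : cqap) : Prop :=
  forall A B, A \in qvars Q -> B \in qvars Q ->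
    A \in qinp Q -> dominates B A -> B \in qinp Q.

Definition hierarchical (Q : cqap) : Prop :=
  forall A B, A \in qvars Q -> B \in qvars Q ->
    [\/ qatoms A \subset qatoms B, qatoms B \subset qatoms A
      | qatoms A :&: qatoms B == set0].

(* Step 1: every occurrence of an input variable x in atom i is replaced by  *)
(*   the fresh variable inr (x, i); other variables v become inl v.          *)
(* Step 2: connected components of the resulting hypergraph.                *)
(* Step 3: inr (x, i) is replaced by the fresh input variable inr (x, C),    *)
(*   C the connected component of inr (x, i); other variables stay (inl v). *)
Section Fracture.
Variable Q : cqap.
Local Notation V := (qV Q).
Local Notation n := (qn Q).

Definition frV1 : finType := (V + (V * 'I_n))%type.

Definition frschema1 (i : 'I_n) : {set frV1} :=
  [set (inl v : frV1) | v in qschema i :\: qinp Q] :|: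
  [set (inr (x, i) : frV1) | x in qschema i :&: qinp Q].

Definition fredge1 : rel frV1 :=
  fun a b => [exists i, (a \in frschema1 i) && (b \in frschema1 i)].

Definition frcomp (a : frV1) : {set frV1} := [set b | connect fredge1 a b].

Definition frV2 : finType := (V + (V * {set frV1}))%type.

Definition frmap (a : frV1) : frV2 :=
  match a with
  | inl v => inl v
  | inr (x, i) => inr (x, frcomp (inr (x, i)))
  end.

Definition frschema (i : 'I_n) : {set frV2} := frmap @: frschema1 i.

Definition frinp : {set frV2} :=
  \bigcup_(i < n) [set frmap (inr (x, i)) | x in qschema i :&: qinp Q].

Definition frout : {set frV2} := [set (inl v : frV2) | v in qout Q].

Definition fracture : cqap := @CQAP frV2 n frschema frinp frout.
End Fracture.

Definition CQAP0 (Q : cqap) : Prop :=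
  [/\ hierarchical (fracture Q), free_dominant (fracture Q)
    & input_dominant (fracture Q)].

(* GYO reduction on a labelled hypergraph (labels : finType L, hyperedge     *)
(* [edge l], initially alive labels [L0]).  Vertices occurring in exactly    *)
(* one alive hyperedge are deleted; a hyperedge contained in another alive   *)
(* hyperedge is deleted (for two identical hyperedges the one whose label is *)
(* larger for the tie-break order [prec] is deleted).  Each round performs  *)
(* all such deletions; enough rounds are done to reach the fixpoint.        *)
Section GYO.
Variables (V L : finType) (edge : L -> {set V}) (prec : rel L).

Definition gyo_cur (W : {set V}) (l : L) : {set V} := edge l :&: W.

Definition gyo_vstep (W : {set V}) (A : {set L}) : {set V} :=
  W :\: [set v | #|[set l in A | v \in gyo_cur W l]| == 1%N].

Definition gyo_deletable (W : {set V}) (A : {set L}) (l : L) : bool :=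
  [exists l', [&& l' \in A, l' != l, gyo_cur W l \subset gyo_cur W l'
              & (gyo_cur W l != gyo_cur W l') || prec l' l]].

Definition gyo_step (s : {set V} * {set L}) : {set V} * {set L} :=
  let W' := gyo_vstep s.1 s.2 in
  (W', s.2 :\: [set l in s.2 | gyo_deletable W' s.2 l]).

Definition gyo (L0 : {set L}) : {set V} * {set L} :=
  iter (#|V| + #|L|).+1 gyo_step (setT, L0).
End GYO.

(* Variable orders, given by a parent function on the variables.            *)
Section VO.
Variables (Q : cqap) (par : qV Q -> option (qV Q)).
Local Notation V := (qV Q).
Local Notation n := (qn Q).

Definition parrel : rel V := fun x y => par x == Some y.

(* y is an ancestor-or-self of x *)
Definition anc_eq (x y : V) : bool := connect parrel x y.
Definition anc (x y : V) : bool := [exists z, (par x == Some z) && anc_eq z y].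

Definition is_leaf (z : V) : bool := [forall c, par c != Some z].

(* a rooted forest with exactly one node per variable of Q, such that the    *)
(* variables of each atom lie on a common root-to-leaf path                  *)
Definition is_VO : Prop :=
  [/\ forall x y, par x = Some y -> x \in qvars Q /\ y \in qvars Q,
      forall x, ~~ anc x x
    & forall i : 'I_n, exists z, [/\ z \in qvars Q, is_leaf z &
                              qschema i \subset [set x | anc_eq z x]]].

Definition access_top : Prop :=
  forall x y, x \in qvars Q -> y \in qvars Q -> anc x y ->
    (qfree x -> qfree y) /\ (x \in qinp Q -> y \notin qout Q).

Definition subtree (X : V) : {set V} := [set Z in qvars Q | anc_eq Z X].

Definition dep (X : V) : {set V} :=
  [set Y in qvars Q | anc X Y &&
     [exists i : 'I_n, exists Z in subtree X, (Y \in qschema i) && (Z \in qschema i)]].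

Definition Sset (X : V) : {set V} := X |: dep X.

(* the lowest variable of atom i (the atom becomes a child of it) *)
Definition lowest (i : 'I_n) : option V :=
  [pick x in qschema i | [forall y in qschema i, anc_eq x y]].

Definition below (X : V) (i : 'I_n) : bool :=
  if lowest i is Some x then x \in subtree X else false.

(* indicator atoms at X: GYO on hyperedges inl i (atoms below X) and inr j    *)
(* (candidate indicator atom of atom j) ; tie-break: atoms before candidates *)
Definition ind_lab_rank (l : ('I_n + 'I_n)%type) : nat :=
  match l with inl i => nat_of_ord i | inr j => (n + j)%N end.

Definition ind_edge (X : V) (l : ('I_n + 'I_n)%type) : {set V} :=
  match l with inl i => qschema i | inr j => qschema j :&: Sset X end.

Definition ind_init (X : V) : {set ('I_n + 'I_n)%type} :=
  [set l | match l with
           | inl i => below X i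
           | inr j => ~~ below X j && (qschema j :&: Sset X != set0)
           end].

Definition indicator_at (X : V) (j : 'I_n) : bool :=
  (inr j \in (gyo (ind_edge X) (fun l' l => ind_lab_rank l' < ind_lab_rank l)
                 (ind_init X)).2).

(* leaves of the extended VO: atoms (inl i) and indicator atoms inr (X', j)  *)
(* = I_{Z} R_j(Z) with Z = schema j ∩ ({X'} ∪ dep X') placed under X'.       *)
Definition eatom : finType := ('I_n + (V * 'I_n))%type.

Definition eschema (e : eatom) : {set V} :=
  match e with inl i => qschema i | inr (X', j) => qschema j :&: Sset X' end.

Definition QX (X : V) : {set eatom} :=
  [set e : eatom | match e with
                   | inl i => below X i
                   | inr (X', j) => (X' \in subtree X) && indicator_at X' j
                   end].

Variable R : realType.
Local Open Scope ring_scope.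

Definition rho_star (E : {set eatom}) (F : {set V}) : R :=
  reals.inf (fun r : R => exists lam : eatom -> R,
         [/\ forall e, 0 <= lam e <= 1,
             forall y, y \in F -> 1 <= \sum_(e in E | y \in eschema e) lam e
           & r = \sum_(e in E) lam e]).

Definition static_width : R :=
  \big[Num.max/0]_(X in qvars Q) rho_star (QX X) (Sset X).

Definition dynamic_width : R :=
  \big[Num.max/0]_(X in qvars Q)
     \big[Num.max/0]_(e in QX X) rho_star (QX X) (Sset X :\: eschema e).
End VO.

(* (d, w) is the lexicographically smallest pair (delta(omega), w(omega))    *)
(* over all access-top VOs omega of the fracture of Q                       *)
Definition cqap_widths (R : realType) (Q : cqap) (d w : R) : Prop :=
  let Qf := fracture Q in
  (exists par : qV Qf -> option (qV Qf), [/\ is_VO par, access_top par,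
                   @dynamic_width Qf par R = d & @static_width Qf par R = w]) /\
  (forall par : qV Qf -> option (qV Qf), is_VO par -> access_top par ->
     (d < @dynamic_width Qf par R)%R \/
     (d = @dynamic_width Qf par R /\ (w <= @static_width Qf par R)%R)).

(* Main.v *)
Require Import Defs.
From HB Require Import structures.
From mathcomp Require Import all_boot all_order all_algebra.
From mathcomp Require Import reals.
From mathcomp Require classical_sets.
From mathcomp Require Import zify.

Set Implicit Arguments.
Unset Strict Implicit.
Unset Printing Implicit Defensive.
Import Order.TTheory GRing.Theory Num.Theory.

Section GenVO.
Variables (P : cqap) (par : qV P -> option (qV P)).
Local Notation V := (qV P).

Lemma ae_refl x : anc_eq par x x. Proof. exact: connect0. Qed.
Lemma ae_trans x y z : anc_eq par x y -> anc_eq par y z -> anc_eq par x z.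
Proof. exact: connect_trans. Qed.
Lemma ae_step x y : par x = Some y -> anc_eq par x y.
Proof. by move=> h; apply: connect1; rewrite /parrel h. Qed.
Lemma anc_ae x y : anc par x y -> anc_eq par x y.
Proof. by move/existsP=> [z /andP[/eqP h a]]; apply: ae_trans (ae_step h) a. Qed.

Lemma ae_next z y z' : anc_eq par z y -> z != y -> par z = Some z' -> anc_eq par z' y.
Proof.
move/connectP=> [p pth lst]; case: p pth lst => [|w p] /= pth lst; first by rewrite lst eqxx.
move=> _ hz; case/andP: pth => /eqP; rewrite hz => -[->] pth.
by apply/connectP; exists p.
Qed.

Lemma ae_comp z x y : anc_eq par z x -> anc_eq par z y ->
  anc_eq par x y \/ anc_eq par y x.
Proof.
move/connectP=> [p]; elim: p z => [|w p IH] z /= pth lst.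
  by rewrite lst => h; left.
case/andP: pth => /eqP hz pth hzy.
case: (eqVneq z y) => [<-|nzy].
  by right; apply/connectP; exists (w :: p) => //=; rewrite /parrel hz eqxx.
exact: IH pth lst (ae_next hzy nzy hz).
Qed.

Lemma in_qvars i x : x \in qschema i -> x \in qvars P.
Proof. by move=> h; apply/bigcupP; exists i. Qed.

Hypothesis VO : is_VO par.

Lemma lowestP i y0 : y0 \in qschema i -> exists x, [/\ lowest par i = Some x,
  x \in qschema i & forall y, y \in qschema i -> anc_eq par x y].
Proof.
move=> y0i; rewrite /lowest; case: pickP => [x /andP[xi /forall_inP H]|none].
  by exists x; split.
exfalso; case: VO => _ _ /(_ i) [z [_ _ sub]].
case: (arg_maxnP (fun x => #|[set w | anc_eq par x w]|) y0i) => x xi xmax.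
have xi' : x \in qschema i := xi. move: (none x) => /=; rewrite xi' /=; move/negbT/negP; apply; apply/forall_inP => y yi.
have zx : anc_eq par z x by move/subsetP: sub => /(_ x xi); rewrite inE.
have zy : anc_eq par z y by move/subsetP: sub => /(_ y yi); rewrite inE.
case: (ae_comp zx zy) => // yx.
case: (boolP (anc_eq par x y)) => // nxy.
have: [set w | anc_eq par x w] \proper [set w | anc_eq par y w].
  apply/properP; split.
    by apply/subsetP=> w; rewrite !inE => xw; apply: ae_trans yx xw.
  by exists y; rewrite !inE ?ae_refl.
move/proper_card; move: (xmax y yi) => /= h1 h2.
by move: (leq_ltn_trans h1 h2); rewrite ltnn.
Qed.

Lemma below_self i X : X \in qschema i -> below par X i.
Proof.
move=> Xi; have [w [lw wi wall]] := lowestP Xi.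
by rewrite /below lw /subtree inE (in_qvars wi) wall.
Qed.

Lemma Sset_cover X y : X \in qvars P -> y \in Sset par X ->
  exists j, below par X j && (y \in qschema j).
Proof.
move=> Xv; rewrite /Sset => /setU1P[->|].
  by case/bigcupP: Xv => i _ Xi; exists i; rewrite Xi below_self.
rewrite /dep inE => /and3P[_ _ /existsP[j /existsP[Z /and3P[ZX yj Zj]]]].
exists j; rewrite yj andbT.
have [w [lw wi wall]] := lowestP Zj.
rewrite /below lw /subtree inE (in_qvars wi) /=.
move: ZX; rewrite /subtree inE => /andP[_ ZX].
exact: ae_trans (wall Z Zj) ZX.
Qed.

End GenVO.

Section Rho.
Variables (P : cqap) (par : qV P -> option (qV P)) (R : realType).
Local Open Scope ring_scope.
Local Notation V := (qV P).

Definition cover_set (E : {set eatom P}) (F : {set V}) : classical_sets.set R :=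
  (fun r : R => exists lam : eatom P -> R,
         [/\ forall e, 0 <= lam e <= 1,
             forall y, y \in F -> 1 <= \sum_(e in E | y \in eschema par e) lam e
           & r = \sum_(e in E) lam e]).

Lemma rho_starE (E : {set eatom P}) (F : {set V}) : rho_star par R E F = reals.inf (cover_set E F).
Proof. by []. Qed.

Lemma cover_ge0 (E : {set eatom P}) (F : {set V}) r : cover_set E F r -> 0 <= r.
Proof.
move=> [lam [h _ ->]]; apply: sumr_ge0 => e _; by case/andP: (h e).
Qed.

Lemma rho_le (E : {set eatom P}) (F : {set V}) r : cover_set E F r -> rho_star par R E F <= r.
Proof.
move=> c; rewrite rho_starE; apply: ge_inf => //.
by exists 0 => s; apply: cover_ge0.
Qed.

Lemma sum_ge_term (T : finType) (Pr : pred T) (f : T -> R) e0 :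
  (forall e, 0 <= f e) -> Pr e0 -> f e0 <= \sum_(e | Pr e) f e.
Proof.
move=> h p0; rewrite (bigD1 e0) //=; rewrite lerDl; apply: sumr_ge0 => *; exact: h.
Qed.

Lemma rho_ge1 (E : {set eatom P}) (F : {set V}) (y : V) : y \in F -> (exists r, cover_set E F r) ->
  1 <= rho_star par R E F.
Proof.
move=> yF [r c]; rewrite rho_starE; apply: lb_le_inf; first by exists r.
move=> s [lam [h cov ->]]; apply: le_trans (cov y yF) _.
rewrite [X in _ <= X](bigID (fun e => y \in eschema par e)) /= lerDl.
apply: sumr_ge0 => e _; by case/andP: (h e).
Qed.

Lemma rho_empty (E : {set eatom P}) : rho_star par R E set0 = 0.
Proof.
apply/eqP; rewrite eq_le; apply/andP; split.
  apply: rho_le; exists (fun _ => 0); split.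
  - by move=> e; rewrite lexx ler01.
  - by move=> y; rewrite inE.
  - by rewrite big1_eq.
rewrite rho_starE; apply: lb_le_inf.
  exists 0, (fun _ => 0); split.
  - by move=> e; rewrite lexx ler01.
  - by move=> y; rewrite inE.
  - by rewrite big1_eq.
by move=> s; apply: cover_ge0.
Qed.

Lemma bigmax_ge (T : finType) (A : pred T) (f : T -> R) x :
  x \in A -> f x <= \big[Num.max/0]_(y in A) f y.
Proof.
move=> xA; rewrite -big_filter.
have : x \in [seq y <- index_enum T | y \in A] by rewrite mem_filter xA mem_index_enum.
elim: [seq _ <- _ | _] => [|a s IH] //=.
rewrite big_cons inE => /orP[/eqP <-|/IH h]; first by rewrite le_max lexx.
by rewrite le_max h orbT.
Qed.

Lemma bigmax_ge0 (T : finType) (A : pred T) (f : T -> R) :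
  0 <= \big[Num.max/0]_(y in A) f y.
Proof.
rewrite -big_filter; elim: [seq _ <- _ | _] => [|a s IH]; first by rewrite big_nil.
by rewrite big_cons le_max IH orbT.
Qed.

Lemma bigmax_le (T : finType) (A : pred T) (f : T -> R) c :
  0 <= c -> (forall y, y \in A -> f y <= c) -> \big[Num.max/0]_(y in A) f y <= c.
Proof.
move=> c0 h; apply: (big_ind (fun x => x <= c)) => //.
by move=> a b ha hb; rewrite ge_max ha hb.
Qed.

Hypothesis VO : is_VO par.

Lemma rho_ge1_vars X : X \in qvars P -> 1 <= rho_star par R (QX par X) (Sset par X).
Proof.
move=> Xv; apply: (@rho_ge1 _ _ X); first by rewrite /Sset setU11.
exists (\sum_(e in QX par X) 1), (fun _ => 1); split => //.
  by move=> e; rewrite ler01 lexx.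
move=> y yS; have [j /andP[bj yj]] := Sset_cover VO Xv yS.
rewrite (bigD1 (inl j)) /=; last by rewrite /QX inE bj yj.
by rewrite lerDl; apply: sumr_ge0 => *; exact: ler01.
Qed.

Lemma lower_bound : qvars P != set0 ->
  (0 < dynamic_width par R) \/
  (0 = dynamic_width par R /\ 1 <= static_width par R).
Proof.
move=> /set0Pn [X Xv].
have := bigmax_ge0 (fun X => X \in qvars P) (fun X =>
     \big[Num.max/0]_(e in QX par X) rho_star par R (QX par X) (Sset par X :\: eschema par e)).
rewrite le_eqVlt => /orP[/eqP h|h]; [right|left] => //; split => //.
rewrite /static_width; apply: le_trans (rho_ge1_vars Xv) _.
exact: (bigmax_ge (fun X => rho_star par R (QX par X) (Sset par X))).
Qed.

End Rho.

Lemma gyo_iter_notin (V L : finType) (edge : L -> {set V}) (prec : rel L) (l : L) k (s : {set V} * {set L}) :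
  l \notin s.2 -> l \notin (iter k (gyo_step edge prec) s).2.
Proof.
elim: k => [//|k IH] h /=; rewrite /gyo_step /= in_setD.
by rewrite (negbTE (IH h)) andbF.
Qed.

Section Canon.
Variable P : cqap.
Local Notation V := (qV P).
Hypothesis hier : hierarchical P.
Hypothesis fdom : free_dominant P.
Hypothesis idom : input_dominant P.
Hypothesis disj : forall x, x \in qinp P -> x \notin qout P.
Hypothesis nonemp : qvars P != set0.

Definition rk (v : V) : nat :=
  if v \in qinp P then 2 else if v \in qout P then 1 else 0.
Definition qa (v : V) : nat := #|qatoms v| * 3 + rk v.
Definition key (v : V) : nat := qa v * #|V| + enum_rank v.

Lemma rk_lt3 v : rk v < 3.
Proof. by rewrite /rk; case: ifP => //; case: ifP. Qed.

Lemma key_inj : injective key.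
Proof.
move=> x y h; have : key x %% #|V| = key y %% #|V| by rewrite h.
rewrite /key !modnMDl !modn_small ?ltn_ord // => h2.
by apply: enum_rank_inj; apply: val_inj.
Qed.

Lemma key_lt x y : qa x < qa y -> key x < key y.
Proof.
rewrite /key; have := ltn_ord (enum_rank x); have := ltn_ord (enum_rank y).
move: (qa x) (qa y) (nat_of_ord (enum_rank x)) (nat_of_ord (enum_rank y)) => a b e1 e2 _ h1 ab.
apply: (@leq_trans (a.+1 * #|V|)); first by rewrite mulSnr ltn_add2l.
apply: leq_trans (leq_addr _ _); by rewrite leq_mul2r ab orbT.

Qed.

Definition cand (y x : V) : bool :=
  [&& x \in qvars P, qatoms y \subset qatoms x & key y < key x].

Definition cpar (y : V) : option V :=
  if y \in qvars P then
    [pick x | cand y x && [forall x', cand y x' ==> (key x <= key x')]]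
  else None.

Lemma cparS y x : cpar y = Some x ->
  [/\ y \in qvars P, cand y x & forall x', cand y x' -> key x <= key x'].
Proof.
rewrite /cpar; case: ifP => // yv; case: pickP => // z /andP[c /forallP h] [<-].
by split => // x' cx'; move: (h x'); rewrite cx'.
Qed.

Lemma cparN y x : y \in qvars P -> cand y x -> exists p, cpar y = Some p.
Proof.
move=> yv c; rewrite /cpar yv; case: pickP => [p _|none]; first by exists p.
exfalso; case: (arg_minnP key c) => m cm mmin.
move: (none m) => /=; rewrite cm /= => /negbT/negP; apply.
by apply/forallP => x'; apply/implyP => /mmin.
Qed.

Lemma cpar_mono x y : cpar x = Some y -> qatoms x \subset qatoms y /\ key x < key y.
Proof. by case/cparS => _ /and3P[]. Qed.

Lemma ae_mono x y : anc_eq cpar x y -> qatoms x \subset qatoms y /\ key x <= key y.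
Proof.
move/connectP=> [p]; elim: p x => [|w p IH] x /= pth lst.
  by rewrite lst subxx leqnn.
case/andP: pth => /eqP /cpar_mono [s1 l1] pth.
have [s2 l2] := IH w pth lst; split; first exact: subset_trans s2.
exact: leq_trans (ltnW l1) l2.
Qed.

Lemma anc_mono x y : anc cpar x y -> qatoms x \subset qatoms y /\ key x < key y.
Proof.
move/existsP=> [z /andP[/eqP /cpar_mono [s1 l1] /ae_mono [s2 l2]]].
by split; [exact: subset_trans s2|exact: leq_trans l1 l2].
Qed.

Lemma core i d : forall x y, key y - key x < d -> x \in qvars P -> y \in qvars P ->
  i \in qatoms x -> i \in qatoms y -> key x <= key y -> anc_eq cpar x y.
Proof.
elim: d => [//|d IH] x y hd xv yv ix iy le.
case: (eqVneq x y) => [->|nxy]; first exact: ae_refl.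
have lt : key x < key y.
  by rewrite ltn_neqAle le andbT; apply: contra nxy => /eqP/key_inj ->.
have sub : qatoms x \subset qatoms y.
  case: (boolP (qatoms x \subset qatoms y)) => // nsub; exfalso.
  case: (hier xv yv) => [sxy|syx|/eqP dis]; first by rewrite sxy in nsub.
    have : qatoms y \proper qatoms x by rewrite properE syx.
    move/proper_card => c.
    have : qa y < qa x by rewrite /qa; have := rk_lt3 y; have := rk_lt3 x; lia.
    by move/key_lt; lia.
  have : i \in qatoms x :&: qatoms y by rewrite inE ix iy.
  by rewrite dis inE.
have c : cand x y by rewrite /cand yv sub lt.
have [p hp] := cparN xv c; case: (cparS hp) => _ cp pmin.
move: cp => /and3P[pv sxp lxp]; have kpy := pmin y c.
case: (eqVneq p y) => [<-|npy]; first exact: ae_step hp.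
apply: ae_trans (ae_step hp) (IH p y _ pv yv _ iy kpy); first by lia.
exact: (subsetP sxp).
Qed.

Lemma chain i x y : x \in qschema i -> y \in qschema i -> key x <= key y ->
  anc_eq cpar x y.
Proof.
move=> xi yi; apply: (@core i (key y - key x).+1) => //.
- exact: (in_qvars xi).
- exact: (in_qvars yi).
- by rewrite inE.
- by rewrite inE.
Qed.

Lemma cVO : is_VO cpar.
Proof.
split.
- by move=> x y h; have [xv c _] := cparS h; case/and3P: c.
- by move=> x; apply/negP => /anc_mono [_]; rewrite ltnn.
move=> i.
pose S := [set c in qvars P | qschema i \subset [set x | anc_eq cpar c x]].
have [c0 c0S] : exists c0, c0 \in S.
  case: (boolP (qschema i == set0)) => [/eqP e|].
    case/set0Pn: nonemp => c cv; exists c; by rewrite inE cv e sub0set.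
  case/set0Pn => y0 y0i; case: (arg_minnP key y0i) => x0 x0i x0min.
  exists x0; rewrite inE (in_qvars x0i) /=; apply/subsetP => y yi; rewrite inE.
  exact: chain x0i yi (x0min y yi).
case: (arg_minnP key c0S) => z zS zmin; have zS' : z \in S := zS; move: zS'; rewrite inE => /andP[zv zsub].
exists z; split => //; apply/forallP => c; apply/eqP => h.
have [cv _ _] := cparS h; have [_ lcz] := cpar_mono h.
have cS : c \in S.
  rewrite inE cv /=; apply/subsetP => x xi.
  move/subsetP: zsub => /(_ x xi); rewrite !inE => zx.
  exact: ae_trans (ae_step h) zx.
by move: (zmin c cS); rewrite leqNgt lcz.
Qed.

Lemma eq_card_of (x y : V) : qatoms x \subset qatoms y -> ~~ (qatoms x \proper qatoms y) ->
  #|qatoms x| = #|qatoms y|.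
Proof.
move=> s np; move: np; rewrite properE s /= negbK => s2.
by apply/eqP; rewrite eqn_leq !subset_leq_card.
Qed.

Lemma cAT : access_top cpar.
Proof.
move=> x y xv yv /anc_mono [sub lt]; split.
- move=> fx; apply/negPn/negP => nfy.
  case: (boolP (qatoms x \proper qatoms y)) => pr.
    by move: nfy; rewrite (fdom xv yv fx pr).
  have ec := eq_card_of sub pr.
  have : qa y < qa x.
    move: fx nfy; rewrite /qa /qfree /rk ec.
    rewrite ltn_add2l.
    by case: (boolP (x \in qinp P)); case: (boolP (x \in qout P));
       case: (boolP (y \in qinp P)); case: (boolP (y \in qout P)).
  by move/key_lt; lia.
- move=> xi; apply/negP => yo.
  case: (boolP (qatoms x \proper qatoms y)) => pr.
    by move: (disj (idom xv yv xi pr)); rewrite yo.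
  have ec := eq_card_of sub pr.
  have yni : y \notin qinp P by apply: contraL yo; apply: disj.
  have : qa y < qa x by rewrite /qa /rk ec xi (negbTE yni) yo; lia.
  by move/key_lt; lia.
Qed.

Lemma below_sub X i : below cpar X i -> Sset cpar X \subset qschema i.
Proof.
rewrite /below; case L: (lowest cpar i) => [w|//].
move: L; rewrite /lowest; case: pickP => // w' /andP[wi _] [ew]; subst w'.
rewrite /subtree inE => /andP[wv wX]; have [sa _] := ae_mono wX.
apply/subsetP => y /setU1P[->|].
  by move/subsetP: sa => /(_ i); rewrite !inE; apply.
rewrite /dep inE => /and3P[_ aXy _]; have [sa2 _] := anc_mono aXy.
by move/subsetP: (subset_trans sa sa2) => /(_ i); rewrite !inE; apply.
Qed.

Lemma ind_false X j : X \in qvars P -> indicator_at cpar X j = false.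
Proof.
case/bigcupP => i0 _ Xi0; have b0 := below_self cVO Xi0; have s0 := below_sub b0.
rewrite /indicator_at /gyo iterSr; apply/negbTE; apply: gyo_iter_notin.
rewrite /gyo_step /= in_setD; apply/negP => /andP[/negP nd jL]; apply: nd.
rewrite inE jL /=; apply/existsP; exists (inl i0).
rewrite /ind_init inE b0 /=; apply/andP; split.
  rewrite /gyo_cur /=; apply: setSI; exact: subset_trans (subsetIr _ _) s0.
by apply/orP; right; apply: leq_trans (ltn_ord i0) (leq_addr _ _).
Qed.

Lemma QX_sub X e : e \in QX cpar X -> Sset cpar X \subset eschema cpar e.
Proof.
case: e => [i|[X' j]]; rewrite /QX inE /=; first exact: below_sub.
move=> /andP[X'X]; rewrite ind_false //.
by move: X'X; rewrite /subtree inE => /andP[].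
Qed.

Variable R : realType.
Local Open Scope ring_scope.

Lemma bigmax0 (T : finType) (A : pred T) (f : T -> R) :
  (forall y, y \in A -> f y = 0) -> \big[Num.max/0]_(y in A) f y = 0.
Proof.
move=> h; apply/eqP; rewrite eq_le bigmax_ge0 andbT.
by apply: bigmax_le => // y yA; rewrite h.
Qed.

Lemma dyn0 : dynamic_width cpar R = 0.
Proof.
rewrite /dynamic_width; apply: bigmax0 => X Xv; apply: bigmax0 => e eQ.
have -> : Sset cpar X :\: eschema cpar e = set0 by apply/eqP; rewrite setD_eq0 QX_sub.
exact: rho_empty.
Qed.

Lemma stat1 : static_width cpar R = 1.
Proof.
apply/eqP; rewrite eq_le; apply/andP; split.
  apply: bigmax_le; first exact: ler01.
  move=> X; case/bigcupP => i0 _ Xi0; have b0 := below_self cVO Xi0.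
  have s0 := below_sub b0.
  apply: rho_le; exists (fun e => if e == inl i0 then 1 else 0); split.
  - by move=> e; case: ifP => _; rewrite ?lexx ?ler01.
  - move=> y yS; rewrite (bigD1 (inl i0)) /=; last first.
      by rewrite /QX inE b0 /= (subsetP s0 _ yS).
    rewrite eqxx lerDl; apply: sumr_ge0 => e _; case: ifP => _ //.
  - rewrite (bigD1 (inl i0)) /=; last by rewrite /QX inE b0.
    by rewrite eqxx big1 ?addr0 // => e /andP[_ /negbTE ->].
case/set0Pn: nonemp => X Xv; apply: le_trans (rho_ge1_vars R cVO Xv) _.
exact: (bigmax_ge (fun X => rho_star cpar R (QX cpar X) (Sset cpar X))).
Qed.

Lemma canon_main :
  (exists par : V -> option V, [/\ is_VO par, access_top par,
        dynamic_width par R = 0 & static_width par R = 1]) /\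
  (forall par : V -> option V, is_VO par -> access_top par ->
     (0 < dynamic_width par R) \/
     (0 = dynamic_width par R /\ 1 <= static_width par R)).
Proof.
split; first by exists cpar; split; [exact: cVO|exact: cAT|exact: dyn0|exact: stat1].
by move=> par vo _; apply: lower_bound.
Qed.

End Canon.

Theorem proposition9p2 (R : realType) (Q : cqap) :
  wf_cqap Q -> qvars Q != set0 -> CQAP0 Q ->
  @cqap_widths R Q 0%R 1%R.
Proof.
move=> _ nq [hier fd idm].
rewrite /cqap_widths /=.
apply: (canon_main hier fd idm _ _ R).
- move=> x /= /bigcupP [i _ /imsetP [y _ ->]].
  by apply/imsetP => -[v _ /=].
- case/set0Pn: nq => v /bigcupP [i _ vi].
  apply/set0Pn; exists (@frmap Q (if v \in qinp Q then inr (v, i) else inl v)).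
  apply/bigcupP; exists i => //=; rewrite /frschema; apply: imset_f.
  rewrite /frschema1; case: ifP => hv; apply/setUP.
    by right; apply: imset_f; rewrite inE vi hv.
  by left; apply: imset_f; rewrite inE vi hv.
Qed.
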